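(* Let $R$ be a commutative ring, $n\ge 1$, $I$ an $n$-absorbing ideal of $R$, and $k$ an integer with $0\le k\le n$. Suppose that for every family $I_1,\dots,I_{n+1}$ of u-ideals of $R$ such that $I_1\cdots I_{n+1}\subseteq I$ and at least $k+1$ of the $I_j$ are principal ideals, $I$ contains the product of some $n$ of the $I_j$'s. Then the same holds with $k+1$ replaced by $k$: for every family $I_1,\dots,I_{n+1}$ of u-ideals of $R$ such that $I_1\cdots I_{n+1}\subseteq I$ and at least $k$ of the $I_j$ are principal, $I$ contains the product of some $n$ of the $I_j$'s.
   Context: All rings are commutative with identity $1\neq 0$. An ideal $I$ of $R$ is $n$-absorbing if whenever $x_1,\dots,x_{n+1}\in R$ and $x_1x_2\cdots x_{n+1}\in I$, the product of some $n$ of the $x_i$'s lies in $I$. An ideal $J$ of $R$ is a u-ideal if whenever $J\subseteq J_1\cup\cdots\cup J_m$ for finitely many ideals $J_1,\dots,J_m$ of $R$, then $J\subseteq J_i$ for some $i$. *)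

(* Defs.v *)
From mathcomp Require Import all_boot all_algebra.
Set Implicit Arguments. Unset Strict Implicit. Unset Printing Implicit Defensive.
Import GRing.Theory.
Local Open Scope ring_scope.

Section IdealDefs.
Variable R : comNzRingType.

Definition is_ideal (I : R -> Prop) : Prop :=
  [/\ I 0, (forall x y, I x -> I y -> I (x + y)) & (forall r x, I x -> I (r * x))].

Definition subideal (I J : R -> Prop) : Prop := forall x, I x -> J x.

Definition gen_ideal (S : R -> Prop) : R -> Prop :=
  fun x => forall J, is_ideal J -> subideal S J -> J x.

Definition prod_ideals (m : nat) (P : pred 'I_m) (F : 'I_m -> R -> Prop)
  : R -> Prop :=
  gen_ideal (fun y => exists x : 'I_m -> R,
                (forall j, P j -> F j (x j)) /\ y = \prod_(j | P j) x j).

Definition n_absorbing (n : nat) (I : R -> Prop) : Prop :=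
  is_ideal I /\
  forall x : 'I_n.+1 -> R, I (\prod_j x j) ->
    exists i : 'I_n.+1, I (\prod_(j | j != i) x j).

Definition u_ideal (J : R -> Prop) : Prop :=
  is_ideal J /\
  forall (m : nat) (Js : 'I_m -> R -> Prop),
    (forall i, is_ideal (Js i)) ->
    (forall x, J x -> exists i, Js i x) ->
    exists i, subideal J (Js i).

Definition principal (J : R -> Prop) : Prop :=
  exists a : R, forall x, J x <-> exists r : R, x = r * a.

Definition absorbs_uideals (n p : nat) (I : R -> Prop) : Prop :=
  forall F : 'I_n.+1 -> R -> Prop,
    (forall j, u_ideal (F j)) ->
    (exists S : {set 'I_n.+1}, p <= #|S| /\ forall j, j \in S -> principal (F j))%N ->
    subideal (prod_ideals predT F) I ->
    exists i : 'I_n.+1, subideal (prod_ideals (fun j => j != i) F) I.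

End IdealDefs.

(* Main.v *)
Require Import Defs.
From mathcomp Require Import all_boot all_algebra.
From Stdlib Require Import Classical.
From mathcomp Require Import zify.
Set Implicit Arguments. Unset Strict Implicit. Unset Printing Implicit Defensive.
Import GRing.Theory.
Local Open Scope ring_scope.

Lemma gen_sub (R : comNzRingType) (S : R -> Prop) y : S y -> gen_ideal S y.
Proof. by move=> Sy J _ sSJ; apply: sSJ. Qed.

Lemma gen_min (R : comNzRingType) (S J : R -> Prop) :
  is_ideal J -> subideal S J -> subideal (gen_ideal S) J.
Proof. by move=> iJ sSJ x; apply. Qed.

Lemma prod_ext (R : comNzRingType) m (P : pred 'I_m) (F G : 'I_m -> R -> Prop) :
  (forall j, P j -> forall z, G j z -> F j z) ->
  subideal (prod_ideals P G) (prod_ideals P F).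
Proof.
move=> H; apply: gen_min.
  split; first by move=> J iJ _; case: iJ.
  - by move=> x y Hx Hy J iJ sJ; have [_ a _] := iJ; apply: a; [apply: Hx|apply: Hy].
  - by move=> r x Hx J iJ sJ; have [_ _ c] := iJ; apply: c; apply: Hx.
move=> y [x [Hx ->]]; apply: gen_sub; exists x; split => // j Pj.
by apply: H => //; apply: Hx.
Qed.

Theorem lemma5 (R : comNzRingType) (n k : nat) (I : R -> Prop) :
  (1 <= n)%N -> (k <= n)%N -> n_absorbing n I ->
  absorbs_uideals n k.+1 I -> absorbs_uideals n k I.
Proof.
move=> _ kn [iI _] Hk F uF [S [kS pS]] sub.
case: (leqP k.+1 #|S|) => hS.
  by apply: Hk => //; exists S.
case: (pickP (fun j => j \notin S)) => [j0 j0S|H]; last first.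
  have eS : S = setT by apply/setP => x; rewrite inE; move: (H x) => /=; case: (x \in S).
  by move: hS; rewrite eS cardsT card_ord; lia.
case: iI => I0 ID IM.
case: (classic (subideal (prod_ideals (fun j => j != j0) F) I)) => Hj0.
  by exists j0.
pose G (x : R) (j : 'I_n.+1) : R -> Prop :=
  if j == j0 then (fun z => exists r, z = r * x) else F j.
pose J' (i : 'I_n.+1) : R -> Prop := fun y => forall x : 'I_n.+1 -> R,
  (forall j, j != i -> j != j0 -> F j (x j)) ->
  I (y * \prod_(j | (j != i) && (j != j0)) x j).
have iJ' : forall i, is_ideal (J' i).
  move=> i; split.
  - by move=> x _; rewrite mul0r.
  - by move=> y z Hy Hz x Hx; rewrite mulrDl; apply: ID; [apply: Hy|apply: Hz].
  - by move=> r y Hy x Hx; rewrite -mulrA; apply: IM; apply: Hy.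
have [iF0 uF0] := uF j0.
have cover : forall x, F j0 x -> exists i : 'I_n, J' (lift j0 i) x.
  move=> x Fx.
  have [i Hi] : exists i : 'I_n.+1, subideal (prod_ideals (fun j => j != i) (G x)) I.
    apply: Hk.
    - move=> j; rewrite /G; case: eqP => _; last exact: uF.
      split.
        split; first by exists 0; rewrite mul0r.
        + by move=> a b [r1 ->] [r2 ->]; exists (r1 + r2); rewrite mulrDl.
        + by move=> a b [r1 ->]; exists (a * r1); rewrite mulrA.
      move=> m Js iJs cov.
      have [i Hi] := cov x (ex_intro _ 1 (esym (mul1r x))).
      exists i => z [r ->]; by case: (iJs i) => _ _ c; apply: c.
    - exists (j0 |: S); split.
        by rewrite cardsU1 j0S.
      move=> j; rewrite in_setU1 /G; case: eqP => [-> _|_ /= jS].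
        by exists x => z; split.
      exact: pS.
    - apply: gen_min; first by split.
      move=> y [z [Hz ->]]; apply: sub; apply: gen_sub; exists z; split => // j _.
      move: (Hz j isT); rewrite /G; case: eqP => [-> [r ->]|//].
      by have [_ _ c] := iF0; apply: c.
  case: (unliftP j0 i) => [i' ei|ei]; last first.
    exfalso; rewrite ei in Hi; apply: Hj0 => y hy; apply: (Hi y); move: y hy; apply: (@prod_ext _ _ _ (G x) F).
    by move=> j; rewrite /G => /negbTE ->.
  exists i' => z Hz.
  pose z' j := if j == j0 then x else z j.
  have : I (\prod_(j | j != i) z' j).
    apply: Hi; apply: gen_sub; exists z'; split => // j nji.
    rewrite /G /z'; case: eqP => [_|/eqP nj0]; first by exists 1; rewrite mul1r.
    by apply: Hz => //; rewrite -ei.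
  rewrite (bigD1 j0) /=; last by rewrite ei neq_lift.
  rewrite /z' eqxx -ei; congr (I (_ * _)); apply: eq_bigr => j /andP [_ /negbTE ->] //.
have [i Hi] := uF0 n (fun i => J' (lift j0 i)) (fun i => iJ' _) cover.
exists (lift j0 i); apply: gen_min; first by split.
move=> y [z [Hz ->]].
rewrite (bigD1 j0) /=; last by rewrite neq_lift.
apply: (Hi (z j0) _ z); first by apply: (Hz j0); rewrite neq_lift.
by move=> j h1 h2; apply: Hz.
Qed.
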